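(* Let $A$ be a commutative subalgebra of a $K$-algebra $E$, $A'$ a non-empty subset of $A$, $\Delta=\{\mathrm{ad}_a\mid a\in A'\}$, and $R$ a subalgebra of $N_\Delta(E)$ with $A\subseteq R$. Then: (1) $R$ is a $\Delta$-locally nilpotent algebra and $\{R_i=R\cap N_\Delta(E)_i\}_{i\geq0}$ is its $\Delta$-order filtration. (2) If $\mathfrak{a}$ is a nonzero ideal of $R$, then $\mathfrak{a}_0=\mathfrak{a}\cap R_0=\mathfrak{a}\cap R^\Delta$ is a nonzero ideal of $R_0=R^\Delta\supseteq A$ such that $R\mathfrak{a}_0R\cap R_0=\mathfrak{a}_0$. (3) If, in addition, $R_0=R^\Delta$ is commutative, then $[R_1,\mathfrak{a}_0]\subseteq\mathfrak{a}_0$.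
   Context: $\mathrm{ad}_a(f)=af-fa$. For $i\ge1$, $\Delta^i=\{\delta_1\cdots\delta_i\mid\delta_j\in\Delta\}$. For an algebra $B$ on which $\Delta$ acts by derivations, $N_\Delta(B)_i=\{b\in B\mid\Delta^{i+1}b=0\}$ ($i\ge0$), $N_\Delta(B)=\bigcup_iN_\Delta(B)_i$; $B$ is $\Delta$-locally nilpotent if $B=N_\Delta(B)$, and then $\{N_\Delta(B)_i\}_{i\ge0}$ is its $\Delta$-order filtration. $B^\Delta=\bigcap_{\delta\in\Delta}\ker\delta$. *)

(* Defs.v *)
From mathcomp Require Import all_boot all_order all_algebra.
Set Implicit Arguments. Unset Strict Implicit. Unset Printing Implicit Defensive.
Import GRing.Theory.
Local Open Scope ring_scope.

Section Defs.
Variables (K : fieldType) (E : algType K).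

Definition ad (a f : E) : E := a * f - f * a.

Definition ad_seq (s : seq E) (b : E) : E := foldr ad b s.

Definition is_subalg (S : E -> Prop) : Prop :=
  [/\ S 0, S 1, (forall x y, S x -> S y -> S (x + y)),
      (forall (k : K) x, S x -> S (k *: x)) &
      (forall x y, S x -> S y -> S (x * y))].

Definition is_comm (S : E -> Prop) : Prop :=
  forall x y, S x -> S y -> x * y = y * x.

Definition is_ideal (B I : E -> Prop) : Prop :=
  (forall x, I x -> B x) /\
  [/\ I 0, (forall x y, I x -> I y -> I (x + y)),
      (forall x y, I x -> I y -> I (x - y)),
      (forall r x, B r -> I x -> I (r * x)) &
      (forall r x, B r -> I x -> I (x * r))].

Definition nonzero_set (I : E -> Prop) : Prop := exists x, I x /\ x != 0.

(* Delta = {ad_a | a in A'};  b is killed by Delta^(i+1) *)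
Definition NE (A' : E -> Prop) (i : nat) (b : E) : Prop :=
  forall s : seq E, size s = i.+1 -> (forall a, a \in s -> A' a) ->
    ad_seq s b = 0.

Definition NEall (A' : E -> Prop) (b : E) : Prop := exists i, NE A' i b.

Definition Delta_stable (A' B : E -> Prop) : Prop :=
  forall a b, A' a -> B b -> B (ad a b).

Definition NB (A' B : E -> Prop) (i : nat) (b : E) : Prop :=
  B b /\ NE A' i b.

Definition Delta_loc_nilp (A' B : E -> Prop) : Prop :=
  Delta_stable A' B /\ forall b, B b -> exists i, NB A' B i b.

Definition Delta_inv (A' B : E -> Prop) (b : E) : Prop :=
  B b /\ forall a, A' a -> ad a b = 0.

Definition gen_ideal (R I : E -> Prop) (y : E) : Prop :=
  exists n (r x t : 'I_n -> E),
    (forall j, R (r j) /\ I (x j) /\ R (t j)) /\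
    y = \sum_(j < n) r j * x j * t j.

End Defs.

(* Main.v *)
Require Import Defs.
From mathcomp Require Import all_boot all_order all_algebra.
From Stdlib Require Import Classical.
Import GRing.Theory.
Local Open Scope ring_scope.
Set Implicit Arguments. Unset Strict Implicit.

Section Helpers.
Variables (K : fieldType) (E : algType K).

Lemma subalg_sub (S : E -> Prop) x y : is_subalg S -> S x -> S y -> S (x - y).
Proof.
case=> _ _ hD hZ _ hx hy; rewrite -scaleN1r; exact: hD _ _ hx (hZ _ _ hy).
Qed.

Lemma subalg_ad (S : E -> Prop) a x : is_subalg S -> S a -> S x -> S (ad a x).
Proof.
move=> hS ha hx; have [_ _ _ _ hM] := hS; rewrite /ad; apply: subalg_sub => //; exact: hM.
Qed.

Lemma ad_mul (a x y : E) : ad a (x * y) = ad a x * y + x * ad a y.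
Proof. rewrite /ad mulrBl mulrBr !mulrA addrA subrK. by []. Qed.
Lemma ad_add (a x y : E) : ad a (x + y) = ad a x + ad a y.
Proof. by rewrite /ad mulrDl mulrDr opprD addrACA. Qed.
Lemma ad_sub (a x y : E) : ad a (x - y) = ad a x - ad a y.
Proof. rewrite /ad mulrBl mulrBr !opprB addrACA [RHS]addrACA; congr (_ + _); exact: addrC. Qed.

Lemma ad0 (a : E) : ad a 0 = 0.
Proof. by rewrite /ad mulr0 mul0r subrr. Qed.

Lemma NE0P (A' : E -> Prop) b : NE A' 0 b <-> forall a, A' a -> ad a b = 0.
Proof.
split.
  move=> h a ha; apply: (h [:: a]) => // c; rewrite inE => /eqP ->; exact.
move=> h [|a [|c s]] //= _ hs; apply: h; apply: hs; exact: mem_head.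
Qed.

Lemma NE0_ad (A' : E -> Prop) a b : NE A' 0 b -> A' a -> ad a b = 0.
Proof. by move/NE0P; apply. Qed.

Lemma NE_ad (A' : E -> Prop) i a b : A' a -> NE A' i.+1 b -> NE A' i (ad a b).
Proof.
move=> ha h s hs hin; rewrite /ad_seq -foldr_rcons; apply: h.
  by rewrite size_rcons hs.
move=> c; rewrite mem_rcons inE => /orP [/eqP ->|] //; exact: hin.
Qed.

End Helpers.

Theorem corollary2p1 (K : fieldType) (E : algType K)
    (A A' R : E -> Prop) :
  is_subalg A -> is_comm A ->
  (forall a, A' a -> A a) -> (exists a, A' a) ->
  is_subalg R -> (forall r, R r -> NEall A' r) -> (forall a, A a -> R a) ->
  let Ri := fun (i : nat) (b : E) => R b /\ NE A' i b in
  (* (1) *)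
  (Delta_loc_nilp A' R /\ (forall i b, NB A' R i b <-> Ri i b)) /\
  (* (2) *)
  (forall I : E -> Prop, is_ideal R I -> nonzero_set I ->
     let I0 := fun x => I x /\ Ri 0%N x in
     (forall x, Ri 0%N x <-> Delta_inv A' R x) /\
     (forall x, I0 x <-> I x /\ Delta_inv A' R x) /\
     (forall a, A a -> Ri 0%N a) /\
     is_ideal (Ri 0%N) I0 /\ nonzero_set I0 /\
     (forall x, (gen_ideal R I0 x /\ Ri 0%N x) <-> I0 x) /\
     (* (3) *)
     (is_comm (Ri 0%N) ->
        forall r x, Ri 1%N r -> I0 x -> I0 (r * x - x * r))).
Proof.
move=> hA hAc hA'A _ hR hRN hAR Ri.
have hR' := hR; case: hR' => hR0 hR1 hRD hRZ hRM.
have Rad : forall a b, A' a -> R b -> R (ad a b).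
  by move=> a b ha hb; apply: subalg_ad => //; apply: hAR; apply: hA'A.
have Ri0P : forall x, Ri 0%N x <-> Delta_inv A' R x.
  move=> x; rewrite /Ri /Delta_inv; split; case=> h1 h2; split => //.
    by apply/NE0P. by apply/NE0P.
split.
  split; last by [].
  split; first by move=> a b; exact: Rad.
  by move=> b hb; have [i hi] := hRN b hb; exists i.
move=> I hI [x0 [hx0 nx0]] I0.
have [hIR [hI0 hID hIB hIl hIr]] := hI.
split; first exact: Ri0P.
split.
  move=> x; split; first by case=> h1 h2; split => //; apply/Ri0P.
  by case=> h1 h2; split => //; apply/Ri0P.
split.
  move=> a ha; split; first exact: hAR.
  apply/NE0P => c hc; rewrite /ad; apply/eqP; rewrite subr_eq0; apply/eqP.
  apply: hAc => //; exact: hA'A.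
split.
  split; first by move=> x [].
  split.
  - split => //; split => //; apply/NE0P => a _; exact: ad0.
  - move=> x y [hx [hx1 hx2]] [hy [hy1 hy2]]; split; first exact: hID.
    split; first exact: hRD.
    apply/NE0P => a ha; rewrite ad_add (NE0_ad hx2 ha).
    by rewrite (NE0_ad hy2 ha) addr0.
  - move=> x y [hx [hx1 hx2]] [hy [hy1 hy2]]; split; first exact: hIB.
    split; first exact: subalg_sub.
    apply/NE0P => a ha; rewrite ad_sub (NE0_ad hx2 ha).
    by rewrite (NE0_ad hy2 ha) subr0.
  - move=> r x [hr1 hr2] [hx [hx1 hx2]]; split; first exact: hIl.
    split; first exact: hRM.
    apply/NE0P => a ha; rewrite ad_mul (NE0_ad hx2 ha).
    by rewrite (NE0_ad hr2 ha) mul0r mulr0 addr0.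
  - move=> r x [hr1 hr2] [hx [hx1 hx2]]; split; first exact: hIr.
    split; first exact: hRM.
    apply/NE0P => a ha; rewrite ad_mul (NE0_ad hx2 ha).
    by rewrite (NE0_ad hr2 ha) mul0r mulr0 addr0.
split.
  have key : forall i x, I x -> x != 0 -> NE A' i x -> nonzero_set I0.
    elim=> [|i IH] x hx nx hN.
      by exists x; split => //; split => //; split => //; exact: hIR.
    case: (classic (forall a, A' a -> ad a x = 0)) => hc.
      by exists x; split => //; split => //; split; [exact: hIR | apply/NE0P].
    have [a ha] : exists a, A' a /\ ad a x <> 0.
      apply: NNPP => hn; apply: hc => a ha; apply: NNPP => hne.
      by apply: hn; exists a.
    case: ha => ha hne; apply: (IH (ad a x)).
    - rewrite /ad; apply: hIB; [apply: hIl | apply: hIr] => //;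
        apply: hAR; exact: hA'A.
    - by apply/eqP.
    - exact: NE_ad.
  have [i hi] := hRN x0 (hIR _ hx0).
  exact: key hi.
split.
  move=> x; split.
    case=> [[n [r [y [t [hj ->]]]]] h2]; split => //.
    apply: (big_ind I) => //.
    move=> j _; have [h1 [[h3 _] h4]] := hj j.
    by apply: hIr => //; apply: hIl.
  move=> hx; split; last by case: hx.
  exists 1%N, (fun _ => 1), (fun _ => x), (fun _ => 1); split.
    by move=> j; split => //; split.
  by rewrite big_ord1 mul1r mulr1.
move=> hcomm r x [hr1 hr2] [hx [hx1 hx2]]; split.
  by apply: hIB; [apply: hIl | apply: hIr].
split; first by apply: subalg_sub => //; apply: hRM.
apply/NE0P => a ha.
rewrite ad_sub !ad_mul (NE0_ad hx2 ha) mulr0 mul0r addr0 add0r.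
have har : Ri 0%N (ad a r) by split; [exact: Rad | exact: NE_ad].
rewrite (hcomm _ _ har) ?subrr //.
Qed.
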